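(* Let $G$ be a bipartite cactus graph with $n\ge4$ vertices and $m$ edges, with degree sequence $d$, and suppose $\beta\ge 1$, where $\beta=\max\{\mu_1,\tfrac12(\mu_1+\mu_{odd})\}$. Then $m\le \left\lfloor\frac{4(n-1)-\beta}{3}\right\rfloor$.
   Context: A cactus graph is a connected simple graph in which every edge belongs to at most one cycle; a bi-cactus is a bipartite cactus. For the degree sequence $d$, $\mu_1$ is the number of entries equal to $1$ and $\mu_{odd}$ is the number of entries that are odd integers greater than $1$. *)

(* Defs.v *)
From mathcomp Require Import all_boot all_order all_algebra.
Set Implicit Arguments. Unset Strict Implicit. Unset Printing Implicit Defensive.
Import Order.TTheory GRing.Theory Num.Theory.

Definition simple_graph (T : finType) (e : rel T) : Prop :=
  symmetric e /\ irreflexive e.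

Definition connected_graph (T : finType) (e : rel T) : Prop :=
  forall x y : T, connect e x y.

Definition bipartite (T : finType) (e : rel T) : Prop :=
  exists c : T -> bool, forall x y, e x y -> c x != c y.

Definition is_graph_cycle (T : finType) (e : rel T) (c : seq T) : bool :=
  [&& 3 <= size c, uniq c & cycle e c].

Definition cycle_edge (T : finType) (c : seq T) (x y : T) : bool :=
  [&& x \in c, y \in c & (next c x == y) || (next c y == x)].

Definition same_cycle (T : finType) (c1 c2 : seq T) : Prop :=
  forall x y, cycle_edge c1 x y = cycle_edge c2 x y.

Definition cactus (T : finType) (e : rel T) : Prop :=
  [/\ simple_graph e, connected_graph e &
   forall (c1 c2 : seq T) (x y : T),
     is_graph_cycle e c1 -> is_graph_cycle e c2 -> e x y ->
     cycle_edge c1 x y -> cycle_edge c2 x y -> same_cycle c1 c2].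

Definition bi_cactus (T : finType) (e : rel T) : Prop :=
  cactus e /\ bipartite e.

Definition deg (T : finType) (e : rel T) (x : T) : nat := #|[set y | e x y]|.

Definition num_edges (T : finType) (e : rel T) : nat :=
  #|[set [set p.1; p.2] | p in [set p : T * T | e p.1 p.2]]|.

Definition mu1 (T : finType) (e : rel T) : nat := #|[set x | deg e x == 1%N]|.

Definition muodd (T : finType) (e : rel T) : nat :=
  #|[set x | odd (deg e x) && (1 < deg e x)%N]|.

Local Open Scope ring_scope.

Definition beta (T : finType) (e : rel T) : rat :=
  Num.max ((mu1 e)%:R) (((mu1 e + muodd e)%N)%:R / 2).

(* Main.v *)
Require Import Defs.
From mathcomp Require Import all_boot all_order all_algebra.
From mathcomp Require Import zify lra.
Import Order.TTheory GRing.Theory Num.Theory.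
Set Implicit Arguments. Unset Strict Implicit. Unset Printing Implicit Defensive.

Ltac nlia :=
  repeat match goal with
  | H : is_true (_ <= _) |- _ => revert H
  | H : is_true (_ < _) |- _ => revert H
  | H : is_true (@eq_op ?E _ _) |- _ => unify (Equality.sort E) nat; revert H
  | H : is_true (negb (@eq_op ?E _ _)) |- _ => unify (Equality.sort E) nat; revert H
  | H : @eq ?A _ _ |- _ => unify A nat; revert H
  end;
  repeat match goal with H : _ |- _ => clear H end; lia.

Definition rem2 (T : finType) (e : rel T) (x y : T) : rel T :=
  [rel a b | e a b && ([set a; b] != [set x; y])].
Definition oncyc (T : finType) (e : rel T) (x y : T) : bool :=
  e x y && connect (rem2 e x y) x y.

Lemma gcycle_rot (T : finType) (e : rel T) D i :
  is_graph_cycle e (rot i D) = is_graph_cycle e D.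
Proof. by rewrite /is_graph_cycle size_rot rot_uniq rot_cycle. Qed.

Lemma cedge_rot (T : finType) (D : seq T) i x y : uniq D ->
  cycle_edge (rot i D) x y = cycle_edge D x y.
Proof. by move=> U; rewrite /cycle_edge !mem_rot !next_rot. Qed.

Lemma prev_head (T : finType) (x : T) p : x \notin p -> prev (x :: p) x = last x p.
Proof.
move=> xp; rewrite prev_nth mem_head memNindex //.
by rewrite -[in RHS](last_cons x x p) -nth_last.
Qed.

Lemma next_prev_neq (T : finType) (D : seq T) x :
  uniq D -> 3 <= size D -> x \in D -> next D x != prev D x.
Proof.
move=> U sD /rot_to [i p Dp].
rewrite -(next_rot i U) -(prev_rot i U) Dp.
have : uniq (x :: p) by rewrite -Dp rot_uniq.
have : 2 <= size p by rewrite -ltnS -[(size p).+1]/(size (x :: p)) -Dp size_rot.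
case: p {Dp} => [|a [|b q]] // _ /andP [xp /andP [aq _]].
rewrite (prev_head xp) [next _ _]/= eqxx.
by apply/eqP => ab; move: aq; rewrite ab /= mem_last.
Qed.

Lemma cedge_iff (T : finType) (D : seq T) v z : uniq D ->
  cycle_edge D v z = (v \in D) && ((z == next D v) || (z == prev D v)).
Proof.
move=> U; case vD: (v \in D); last by rewrite /cycle_edge vD.
have E: (next D z == v) = (z == prev D v).
  by apply/eqP/eqP => [<-|->]; rewrite ?prev_next ?next_prev.
rewrite /cycle_edge vD E [next D v == z]eq_sym /=.
case: (boolP (z == next D v)) => [/eqP->|_]; first by rewrite mem_next vD.
by case: (boolP (z == prev D v)) => [/eqP->|_]; rewrite ?mem_prev ?vD ?andbF.
Qed.

Lemma cedge_sym (T : finType) (D : seq T) x y : cycle_edge D x y = cycle_edge D y x.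
Proof. by rewrite /cycle_edge andbCA orbC. Qed.

Lemma cedge_e (T : finType) (e : rel T) D x y : symmetric e -> cycle e D ->
  cycle_edge D x y -> e x y.
Proof.
move=> se cD /and3P [xD yD /orP [/eqP <-|/eqP <-]]; first exact: next_cycle.
by rewrite se; apply: next_cycle.
Qed.

Lemma rem2_sub (T : finType) (e : rel T) x y a b : rem2 e x y a b -> e a b.
Proof. by case/andP. Qed.

Lemma rem2_sym (T : finType) (e : rel T) x y : symmetric e -> symmetric (rem2 e x y).
Proof. by move=> se a b; rewrite /rem2 /= se setUC. Qed.

Lemma rem2C (T : finType) (e : rel T) x y : rem2 e x y =2 rem2 e y x.
Proof. by move=> a b; rewrite /rem2 /= [[set y; x]]setUC. Qed.

Lemma oncycC (T : finType) (e : rel T) x y : symmetric e ->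
  oncyc e x y = oncyc e y x.
Proof.
move=> se; rewrite /oncyc se (eq_connect (rem2C e x y)).
by rewrite (sym_connect_sym (rem2_sym y x se)).
Qed.

Lemma cycle_of_conn (T : finType) (e : rel T) x y :
  symmetric e -> irreflexive e -> oncyc e x y ->
  exists D, is_graph_cycle e D && cycle_edge D x y.
Proof.
move=> se ie /andP [exy /connectP [p pp yl]].
case: (shortenP pp) yl => p' pp' U _ yl.
have pe : path e x p' by apply: sub_path pp'; apply: rem2_sub.
exists (x :: p'); apply/andP; split.
  rewrite /is_graph_cycle U /= rcons_path pe -yl se exy andbT.
  case: p' pp' {pe U} yl => [|z [|w q]] //=; first by move=> _ yx; rewrite yx ie in exy.
  by rewrite /rem2 /= => /andP [/andP [_ /negP]] => h _ yz; case: h; rewrite yz.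
have xp : x \notin p' by case/andP: U.
rewrite cedge_iff // mem_head.
by rewrite (prev_head xp) yl eqxx orbT.
Qed.

Lemma oncyc_of_cycle (T : finType) (e : rel T) D x y :
  symmetric e -> is_graph_cycle e D -> cycle_edge D x y -> oncyc e x y.
Proof.
move=> se /and3P [sD U cD].
wlog xy: x y / y = next D x.
  move=> W; rewrite cedge_iff // => /andP [xD /orP [/eqP|/eqP]] h.
    by apply: W => //; rewrite cedge_iff // xD h eqxx.
  rewrite oncycC //; apply: (W y x); first by rewrite h (next_prev U).
  by rewrite cedge_iff // h mem_prev xD (next_prev U) eqxx.
move=> xyD; have xD : x \in D by case/and3P: xyD.
case/rot_to: xD (xD) => i p Dp xD.
have U' : uniq (x :: p) by rewrite -Dp rot_uniq.
have c' : cycle e (x :: p) by rewrite -Dp rot_cycle.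
have s' : 2 <= size p by rewrite -ltnS -[(size p).+1]/(size (x :: p)) -Dp size_rot.
rewrite xy -(next_rot i U) Dp.
case: p {Dp} U' c' s' => [|a [|b q]] // U' c' _.
rewrite [next _ _]/= eqxx /oncyc.
move: c' => /= /andP [exa c']; rewrite exa /=.
rewrite (sym_connect_sym (rem2_sym x a se)).
move: U' => /= /andP [xabq /andP [abq bqU]].
have [lq ql] : (last b q \in b :: q) /\ (last b q != x).
  split; first exact: mem_last.
  by apply/eqP => h; move: xabq; rewrite inE negb_or -h mem_last andbF.
apply: (@connect_trans _ _ (last b q)).
  apply/connectP; exists (b :: q) => //.
  apply: (@sub_in_path _ (fun z => z != x) e); last first.
    by move: c'; rewrite /= rcons_path => /andP [-> /andP [-> _]].
    by apply/allP => z zq; apply/eqP => h; move: xabq; rewrite -h zq.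
  move=> u w ux wx euw; rewrite /rem2 /= euw /=; apply/eqP => h.
  have : x \in [set u; w] by rewrite h set21.
  by rewrite !inE ![x == _]eq_sym (negbTE ux) (negbTE wx).
apply: connect1; rewrite /rem2 /=.
move: c'; rewrite /= rcons_path => /andP [_ /andP [_ ->]] /=.
apply/eqP => h; have : last b q \in [set x; a] by rewrite -h set21.
by rewrite !inE (negbTE ql) /= => /eqP h2; move: abq; rewrite -h2 lq.
Qed.

Lemma cycle_even (T : finType) (e : rel T) (col : T -> bool) D :
  (forall x y, e x y -> col x != col y) -> uniq D -> cycle e D -> ~~ odd (size D).
Proof.
move=> hc U cD.
set A := [set x in D] :&: [set x | col x].
set B := [set x in D] :\: [set x | col x].
have nA : forall x, x \in D -> col (next D x) = ~~ col x.
  move=> x xD; have := hc _ _ (next_cycle cD xD).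
  by case: (col x); case: (col (next D x)).
have ninj : injective (next D) := can_inj (prev_next U).
have AB : #|A| <= #|B|.
  rewrite -(card_imset _ ninj); apply: subset_leq_card; apply/subsetP => z.
  case/imsetP => x; rewrite !inE => /andP [xD cx] ->.
  by rewrite mem_next xD nA // cx.
have BA : #|B| <= #|A|.
  rewrite -(card_imset _ ninj); apply: subset_leq_card; apply/subsetP => z.
  case/imsetP => x; rewrite !inE => /andP [cx xD] ->.
  by rewrite mem_next xD nA // cx.
have := cardsID [set x | col x] [set x in D].
have -> : #|[set x in D]| = size D by rewrite cardsE; apply/card_uniqP.
rewrite -/A -/B => <-.
have -> : #|B| = #|A| by apply/eqP; rewrite eqn_leq AB BA.
by rewrite addnn odd_double.
Qed.

Definition Ced (T : finType) (D : seq T) : {set {set T}} :=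
  [set [set x; next D x] | x in D].

Lemma set2_eq (T : finType) (a b c d : T) : [set a; b] = [set c; d] ->
  (a = c /\ b = d) \/ (a = d /\ b = c).
Proof.
move=> h.
have ha : a \in [set c; d] by rewrite -h set21.
have hb : b \in [set c; d] by rewrite -h set22.
have hc : c \in [set a; b] by rewrite h set21.
have hd : d \in [set a; b] by rewrite h set22.
move: ha hb hc hd; rewrite !inE.
case/orP => /eqP ha; case/orP => /eqP hb; subst.
- by move=> _ /orP [] /eqP ->; left.
- by left.
- by right.
- by move=> /orP [] /eqP -> _; right.
Qed.

Lemma card_Ced (T : finType) (D : seq T) : uniq D -> 3 <= size D -> #|Ced D| = size D.
Proof.
move=> U sD; rewrite card_in_imset ?cardsE ?(card_uniqP U) //.
move=> x y xD yD /set2_eq [[-> //]|[h1 h2]].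
have := next_prev_neq U sD yD.
by rewrite -h1 -h2 (prev_next U) eqxx.
Qed.

Definition Eset (T : finType) (e : rel T) : {set {set T}} :=
  [set [set p.1; p.2] | p in [set p : T * T | e p.1 p.2]].

Lemma tree_bound (T : finType) (e : rel T) (col : T -> bool) (r : T) :
  symmetric e -> (forall x y, e x y -> col x != col y) ->
  (forall x y, connect e x y) ->
  (forall x y, e x y -> ~~ oncyc e x y) -> #|Eset e| <= #|T|.-1.
Proof.
move=> se hc conn acyc.
pose lay := fun k => iter k (fun S : {set T} => S :|: [set y | [exists x in S, e x y]]) [set r].
have layS k : lay k.+1 = lay k :|: [set y | [exists x in lay k, e x y]] by [].
have reach x : exists k, x \in lay k.
  have /connectP [p pp ->] := conn r x.
  elim/last_ind: p pp => [|p y IH]; first by exists 0; rewrite /= set11.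
  rewrite rcons_path => /andP [pp ey]; case: (IH pp) => k hk; exists k.+1.
  rewrite last_rcons layS inE; apply/orP; right; rewrite inE.
  by apply/existsP; exists (last r p); rewrite hk ey.
have [dist [dP dmin]] : exists dist : T -> nat, (forall x, x \in lay (dist x)) /\
    (forall x k, x \in lay k -> dist x <= k).
  exists (fun x => ex_minn (reach x)); split=> x; first by case: ex_minnP.
  by case: ex_minnP => m _ h k /h.
have dr : dist r = 0.
  by apply/eqP; rewrite -leqn0; apply: dmin; rewrite /= set11.
have d0 x : dist x = 0 -> x = r.
  by move=> h; have := dP x; rewrite h /= => /set1P.
have dedge x y : e x y -> dist y <= (dist x).+1.
  move=> exy; apply: dmin; rewrite layS inE; apply/orP; right; rewrite inE.
  by apply/existsP; exists x; rewrite dP exy.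
have ddown x k : dist x = k.+1 -> exists y, e y x && (dist y == k).
  move=> h; have := dP x; rewrite h layS inE => /orP [hk|].
    by have := dmin _ _ hk; rewrite h ltnn.
  rewrite inE => /existsP [y /andP [yk eyx]]; exists y; rewrite eyx /=.
  have := dmin _ _ yk; have := dedge _ _ eyx; rewrite h; nlia.
clear dP dmin layS reach lay.
have dcol x : col x = col r (+) odd (dist x).
  suff H : forall k x, dist x = k -> col x = col r (+) odd k by apply: (H _ x erefl).
  elim=> [|k IH] {}x hk.
    by rewrite (d0 _ hk); case: (col r).
  have [y /andP [eyx /eqP dy]] := ddown _ _ hk.
  have := hc _ _ eyx; rewrite (IH _ dy) /=.
  by case: (col x); case: (col r); case: (odd k).
have dadj x y : e x y -> (dist y == (dist x).+1) || (dist x == (dist y).+1).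
  move=> exy; have h1 := dedge _ _ exy; rewrite se in exy.
  have h2 := dedge _ _ exy.
  have ne : dist x != dist y.
    by apply/eqP => h; have := hc _ _ exy; rewrite (dcol x) (dcol y) h eqxx.
  have [lt|gt|eq] := ltngtP (dist x) (dist y).
  - by rewrite eqn_leq h1 lt.
  - by rewrite orbC eqn_leq h2 gt.
  - by move: ne; rewrite eq eqxx.
have conn_down x y z : dist z < dist x -> connect (rem2 e x y) z r.
  suff H : forall k z, dist z = k -> dist z < dist x -> connect (rem2 e x y) z r.
    by move=> lt; apply: (H _ z erefl lt).
  elim=> [|k IH] {}z hk.
    by rewrite (d0 _ hk) connect0.
  move=> lt; have [w /andP [ewz /eqP dw]] := ddown _ _ hk.
  apply: (@connect_trans _ _ w); last by apply: IH => //; nlia.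
  apply: connect1; rewrite /rem2 /= se ewz /=; apply/eqP => h.
  have : x \in [set z; w] by rewrite h set21.
  rewrite !inE => /orP [] /eqP xe; subst x; nlia.
have uniq_down x y1 y2 : e y1 x -> e y2 x -> (dist x == (dist y1).+1) ->
    (dist x == (dist y2).+1) -> y1 = y2.
  move=> e1 e2 d1 d2; case: (eqVneq y1 y2) => // neq.
  have := acyc x y1; rewrite se e1 => /(_ isT); rewrite /oncyc se e1 /=.
  case/negP; apply: (@connect_trans _ _ y2).
    apply: connect1; rewrite /rem2 /= se e2 /=; apply/eqP => /set2_eq.
    by case=> [[_ h]|[h _]]; [move: neq; rewrite h eqxx | move: d1; rewrite -h; nlia].
  apply: (@connect_trans _ _ r); first by apply: conn_down; nlia.
  rewrite (sym_connect_sym (rem2_sym x y1 se)); apply: conn_down; nlia.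
pose f x := [set x; odflt x [pick y | e y x && (dist x == (dist y).+1)]].
have sub : Eset e \subset f @: [set~ r].
  apply/subsetP => s /imsetP [[p1 p2]]; rewrite inE /= => ep ->.
  wlog dp : p1 p2 ep / dist p2 == (dist p1).+1.
    move=> W; case/orP: (dadj _ _ ep) => h; first exact: W.
    by rewrite setUC; apply: W => //; rewrite se.
  apply/imsetP; exists p2.
    by rewrite in_setC1; apply/eqP => h; move: dp; rewrite h dr.
  rewrite /f; case: pickP => [y /andP [eyx dy]|none]; last by have := none p1; rewrite ep dp.
  by rewrite setUC (uniq_down _ _ _ eyx ep dy dp).
apply: (leq_trans (subset_leq_card sub)).
by apply: (leq_trans (leq_imset_card _ _)); rewrite cardsC1.
Qed.

Definition CEset (T : finType) (e : rel T) : {set {set T}} :=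
  [set [set p.1; p.2] | p in [set p : T * T | oncyc e p.1 p.2]].

Definition cactus_prop (T : finType) (e : rel T) := forall (c1 c2 : seq T) (x y : T),
  is_graph_cycle e c1 -> is_graph_cycle e c2 -> e x y ->
  cycle_edge c1 x y -> cycle_edge c2 x y -> same_cycle c1 c2.

Lemma gcycle_sub (T : finType) (e e' : rel T) c : subrel e e' ->
  is_graph_cycle e c -> is_graph_cycle e' c.
Proof. by move=> s /and3P [h1 h2 h3]; rewrite /is_graph_cycle h1 h2 (sub_cycle s h3). Qed.

Lemma F1 (T : finType) (col : T -> bool) (r : T) : forall m (e : rel T),
  #|Eset e| = m -> symmetric e -> (forall x y, e x y -> col x != col y) ->
  cactus_prop e -> (forall x y, connect e x y) ->
  4 * #|Eset e| <= 4 * #|T|.-1 + #|CEset e|.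
Proof.
elim/ltn_ind => m IH e Hm se hc cp conn.
have ie : irreflexive e by move=> x; apply/negP => exx; have := hc _ _ exx; rewrite eqxx.
case: (pickP [pred p : T * T | oncyc e p.1 p.2]) => [[x y] /= oxy | none]; last first.
  have := tree_bound r se hc conn (fun x y _ => negbT (none (x, y))).
  nlia.
have [D /andP [gD cxy]] := cycle_of_conn se ie oxy.
have /andP [exy cnxy] := oxy.
pose e' := rem2 e x y.
have E' : Eset e' = Eset e :\ [set x; y].
  apply/setP => s; rewrite in_setD1; apply/imsetP/andP.
    case=> [[a b]]; rewrite inE /= /rem2 /= => /andP [eab ne] ->; split => //.
    by apply/imsetP; exists (a, b) => //; rewrite inE.
  case=> ne /imsetP [[a b]]; rewrite inE /= => eab sab; exists (a, b) => //.
  by rewrite inE /= /e' /rem2 /= eab -sab ne.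
have xyE : [set x; y] \in Eset e by apply/imsetP; exists (x, y); rewrite ?inE.
have cardE : #|Eset e'| = #|Eset e| - 1.
  by rewrite E' [#|Eset e|](cardsD1 [set x; y] (Eset e)) xyE add1n subn1.
have se' : symmetric e' := rem2_sym x y se.
have sub' : subrel e' e by move=> a b; apply: rem2_sub.
have hc' : forall a b, e' a b -> col a != col b by move=> a b /sub'; apply: hc.
have cp' : cactus_prop e'.
  move=> c1 c2 a b g1 g2 eab; apply: cp; rewrite ?(gcycle_sub sub') ?sub' //.
have conn' : forall a b, connect e' a b.
  move=> a b; apply: (connect_sub _ (conn a b)) => {}a {}b eab.
  case: (eqVneq [set a; b] [set x; y]) => [h|ne]; last first.
    by apply: connect1; rewrite /e' /rem2 /= eab ne.
  case/set2_eq: h => [[-> ->]|[-> ->]] //.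
  by rewrite (sym_connect_sym se').
have ge := gD; case/and3P: ge => sD UD cD.
have CedCE : Ced D \subset CEset e.
  apply/subsetP => s /imsetP [z zD ->]; apply/imsetP; exists (z, next D z) => //.
  rewrite inE /=; apply: (oncyc_of_cycle se gD).
  by rewrite /cycle_edge zD mem_next zD eqxx.
have CE' : CEset e' \subset CEset e :\: Ced D.
  apply/subsetP => s /imsetP [[a b]]; rewrite inE /= => oab ->.
  rewrite inE; apply/andP; split.
    apply/negP => /imsetP [z zD hz].
    have eab : e' a b by case/andP: oab.
    have ie' : irreflexive e' by move=> w; apply/negP => /sub'; rewrite ie.
    have [D' /andP [gD' cab]] := cycle_of_conn se' ie' oab.
    have cDab : cycle_edge D a b.
      case/set2_eq: hz => [[-> ->]|[-> ->]]; rewrite ?[cycle_edge D (next D z) z]cedge_sym;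
        by rewrite /cycle_edge zD mem_next zD eqxx.
    have := cp _ _ _ _ gD (gcycle_sub sub' gD') (sub' _ _ eab) cDab cab.
    move=> /(_ x y); rewrite cxy => /esym cD'.
    have c' : cycle e' D' by case/and3P: gD'.
    by have := cedge_e se' c' cD'; rewrite /e' /rem2 /= eqxx andbF.
  apply/imsetP; exists (a, b) => //; rewrite inE /=.
  case/andP: oab => eab cab; rewrite /oncyc (sub' _ _ eab) /=.
  apply: (connect_sub _ cab) => u w h; apply: connect1.
  by move: h; rewrite /rem2 /= => /andP [/sub' -> ->].
have c4 : 4 <= #|Ced D|.
  rewrite card_Ced //; move: sD (cycle_even hc UD cD); case: (size D) => [|[|[|[|k]]]] //.
have := IH _ _ e' erefl se' hc' cp' conn'.
have := subset_leq_card CE'.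
rewrite cardsD (setIidPr CedCE) cardE.
have : 1 <= #|Eset e| by rewrite (cardsD1 [set x; y]) xyE.
rewrite Hm; have := subset_leq_card CedCE; move: c4; set d := #|Ced D|; set c := #|CEset e|; set c2 := #|CEset e'|; set N := #|T|.-1; clearbody d c c2 N; move=> h1 h2 h3 h4 h5; have h6 := h5 ltac:(nlia); nlia.
Qed.

Lemma even_invol (T : finType) (f : T -> T) : forall n (S : {set T}), #|S| = n ->
  (forall x, x \in S -> [/\ f x \in S, f x != x & f (f x) = x]) -> ~~ odd n.
Proof.
elim/ltn_ind => n IH S Hn hf.
case: (set_0Vmem S) => [S0|[x xS]]; first by rewrite -Hn S0 cards0.
have [fxS fxx ffx] := hf x xS.
pose S' := S :\ x :\ f x.
have cS : #|S| = (#|S'|).+2.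
  rewrite (cardsD1 x S) xS (cardsD1 (f x) (S :\ x)) !inE fxx fxS /=.
  by rewrite add1n.
have hf' : forall y, y \in S' -> [/\ f y \in S', f y != y & f (f y) = y].
  move=> y; rewrite !inE => /and3P [yfx yx yS]; have [fyS fyy ffy] := hf y yS.
  split=> //; rewrite fyS andbT; apply/andP; split.
    by apply/eqP => h; move: yx; rewrite -ffy h ffx eqxx.
  by apply/eqP => h; move: yfx; rewrite -ffy h eqxx.
have := IH _ _ S' erefl hf'.
by rewrite -Hn cS /= negbK => ->.
Qed.

Lemma cycdeg_even (T : finType) (e : rel T) v : symmetric e -> irreflexive e ->
  cactus_prop e -> ~~ odd #|[set x | oncyc e v x]|.
Proof.
move=> se ie cp; set S := [set x | oncyc e v x].
have ex : forall x, exists D : seq T, x \in S -> is_graph_cycle e D && cycle_edge D v x.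
  move=> x; case: (boolP (x \in S)) => [xS|nxS]; last by exists [::].
  by move: xS; rewrite inE => /(cycle_of_conn se ie) [D h]; exists D.
have [Df hD] := fin_all_exists ex.
pose pt x := if next (Df x) v == x then prev (Df x) v else next (Df x) v.
have key : forall x, x \in S -> [/\ uniq (Df x), 2 < size (Df x), v \in Df x,
    is_graph_cycle e (Df x) & (x == next (Df x) v) || (x == prev (Df x) v)].
  move=> x xS; have /andP [g c] := hD x xS; have g' := g.
  case/and3P: g' => sD U _; move: c; rewrite cedge_iff // => /andP [vD h].
  by split.
have ptS : forall x, x \in S -> pt x \in S /\ cycle_edge (Df x) v (pt x).
  move=> x xS; have [U sD vD g h] := key x xS.
  have ce : cycle_edge (Df x) v (pt x).
    by rewrite cedge_iff // vD /pt; case: ifP => _; rewrite eqxx ?orbT.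
  by split=> //; rewrite inE; apply: (oncyc_of_cycle se g ce).
apply: (even_invol (f := pt) erefl) => x xS.
have [U sD vD g h] := key x xS; have [ptxS cpt] := ptS x xS.
have nepv := next_prev_neq U sD vD.
have ptne : pt x != x.
  rewrite /pt; case: ifP => [/eqP hx|/negbT nx] //.
  by apply/eqP => hp; move: nepv; rewrite hx hp eqxx.
split=> //.
set y := pt x.
have [U2 sD2 vD2 g2 h2] := key y ptxS; have [_ cpt2] := ptS y ptxS.
have ev : e v y by apply: (cedge_e se _ cpt); case/and3P: g.
have cy2 : cycle_edge (Df y) v y by rewrite cedge_iff // vD2.
have sc := cp _ _ _ _ g g2 ev cpt cy2.
have cx2 : cycle_edge (Df y) v x.
  by rewrite -sc cedge_iff // vD h.
move: cx2 h2; rewrite cedge_iff // vD2 /= => hx2 hy2.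
change ((if next (Df y) v == y then prev (Df y) v else next (Df y) v) = x).
move: ptne hx2 hy2; rewrite -/y.
move=> yx hx2 hy2; case: ifP => [/eqP ny|/negbT ny].
  case/orP: hx2 => /eqP hx; last by [].
  by move: yx; rewrite hx ny eqxx.
case/orP: hx2 => /eqP hx; first by [].
case/orP: hy2 => /eqP hy; first by move: ny; rewrite -hy eqxx.
by move: yx; rewrite hx -hy eqxx.
Qed.


Lemma orient (T : finType) (e R : rel T) (col : T -> bool) :
  (forall x y, e x y -> col x != col y) -> symmetric R -> subrel R e ->
  #|[set [set p.1; p.2] | p in [set p : T * T | R p.1 p.2]]| =
  #|[set p : T * T | R p.1 p.2 && col p.1]|.
Proof.
move=> hc sR sub.
have -> : [set [set p.1; p.2] | p in [set p : T * T | R p.1 p.2]] =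
   [set [set p.1; p.2] | p in [set p : T * T | R p.1 p.2 && col p.1]].
  apply/setP => s; apply/imsetP/imsetP => [[[a b]]|[[a b]]]; rewrite inE /=.
    move=> Rab ->; case ca: (col a).
      by exists (a, b) => //; rewrite inE /= Rab ca.
    exists (b, a); last by rewrite /= setUC.
    rewrite inE /= sR Rab /=; have := hc _ _ (sub _ _ Rab); rewrite ca.
    by case: (col b).
  by case/andP => Rab _ ->; exists (a, b) => //; rewrite inE.
rewrite card_in_imset // => [[a b] [c d]]; rewrite !inE /=.
move=> /andP [Rab ca] /andP [Rcd cc] /set2_eq [[-> ->] //|[h1 h2]].
by have := hc _ _ (sub _ _ Rcd); rewrite -h1 ca cc.
Qed.

Definition Rb (T : finType) (e : rel T) : rel T := [rel a b | e a b && ~~ oncyc e a b].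
Definition Ub (T : finType) (e : rel T) : {set {set T}} :=
  [set [set p.1; p.2] | p in [set p : T * T | Rb e p.1 p.2]].

Lemma Rb_sym (T : finType) (e : rel T) : symmetric e -> symmetric (Rb e).
Proof. by move=> se a b; rewrite /Rb /= se oncycC. Qed.

Lemma oncyc_sym (T : finType) (e : rel T) : symmetric e -> symmetric (oncyc e).
Proof. by move=> se a b; rewrite oncycC. Qed.

Lemma Rb_sub (T : finType) (e : rel T) : subrel (Rb e) e.
Proof. by move=> a b /andP []. Qed.

Lemma oncyc_sub (T : finType) (e : rel T) : subrel (oncyc e) e.
Proof. by move=> a b /andP []. Qed.

Lemma count_main (T : finType) (e : rel T) (col : T -> bool) :
  symmetric e -> (forall x y, e x y -> col x != col y) ->
  #|Eset e| = #|Ub e| + #|CEset e|.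
Proof.
move=> se hc.
rewrite /Eset /Ub /CEset (orient hc se (fun _ _ h => h)).
rewrite (orient hc (Rb_sym se) (@Rb_sub _ e)).
rewrite (orient hc (oncyc_sym se) (@oncyc_sub _ e)).
rewrite -(cardsID [set p : T * T | oncyc e p.1 p.2]) addnC.
congr (_ + _); apply: eq_card => [[a b]]; rewrite !inE /=.
  by rewrite /Rb /=; case: (oncyc e a b); rewrite ?andbF ?andbT.
 by case: (boolP (oncyc e a b)) => h; rewrite ?andbF ?andbT //= (oncyc_sub h).
Qed.

Lemma card_Bo (T : finType) (e : rel T) (col : T -> bool) :
  symmetric e -> (forall x y, e x y -> col x != col y) ->
  #|[set p : T * T | Rb e p.1 p.2]| = 2 * #|Ub e|.
Proof.
move=> se hc.
have hc' : forall x y, e x y -> ~~ col x != ~~ col y.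
  by move=> x y /hc; case: (col x); case: (col y).
rewrite -(cardsID [set p : T * T | col p.1]) mul2n -addnn.
congr (_ + _).
  rewrite /Ub (orient hc (Rb_sym se) (@Rb_sub _ e)).
  by apply: eq_card => p; rewrite !inE.
rewrite /Ub (orient hc' (Rb_sym se) (@Rb_sub _ e)).
by apply: eq_card => p; rewrite !inE andbC.
Qed.

Lemma leaf_bound (T : finType) (e : rel T) :
  symmetric e -> irreflexive e -> (forall x y, connect e x y) -> 3 <= #|T| ->
  mu1 e <= #|Ub e|.
Proof.
move=> se ie conn nT.
pose nb x := odflt x [pick y | e x y].
have nbP x : deg e x == 1 -> [set z | e x z] = [set nb x].
  move=> /cards1P [y hy]; rewrite /nb; case: pickP => [z ez|none].
    have : z \in [set z | e x z] by rewrite inE.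
    by rewrite hy => /set1P ->.
  have : y \in [set z | e x z] by rewrite hy set11.
  by rewrite inE none.
have nbE x z : deg e x == 1 -> e x z = (z == nb x).
  by move=> /nbP h; rewrite -in_set1 -h inE.
rewrite /mu1 -(card_in_imset (f := fun x => [set x; nb x])); last first.
  move=> x1 x2; rewrite !inE => l1 l2 /set2_eq [[]//|[h1 h2]].
  exfalso.
  have cl : forall p a, a \in [set x1; x2] -> path e a p -> last a p \in [set x1; x2].
    elim=> [|z p IH] a //= ha /andP [eaz pz]; apply: IH pz.
    move: ha eaz; rewrite !inE => /orP [] /eqP ->.
      by rewrite (nbE _ _ l1) h2 => /eqP ->; rewrite eqxx orbT.
    by rewrite (nbE _ _ l2) -h1 => /eqP ->; rewrite eqxx.
  have : ~~ ([set: T] \subset [set x1; x2]).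
    apply/negP => /subset_leq_card; rewrite cardsT cards2; move: nT.
    by case: (x1 != x2); case: #|T| => [|[|[|k]]].
  case/subsetPn => z _ zn.
  have /connectP [p pp hz] := conn x1 z.
  by move: zn; rewrite hz (cl p x1) // set21.
apply: subset_leq_card; apply/subsetP => s /imsetP [x]; rewrite inE => lx ->.
apply/imsetP; exists (x, nb x) => //; rewrite inE /Rb /= (nbE _ _ lx) eqxx /=.
apply/negP => /andP [_ /connectP [[|z p] /= pp hz]].
  by have := nbE _ x lx; rewrite hz eqxx ie.
case/andP: pp => /andP [exz]; rewrite (nbE _ _ lx) in exz.
by rewrite (eqP exz) eqxx.
Qed.

Lemma odd_bound (T : finType) (e : rel T) :
  symmetric e -> irreflexive e -> cactus_prop e ->
  #|[set x | odd (deg e x)]| <= #|[set p : T * T | Rb e p.1 p.2]|.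
Proof.
move=> se ie cp.
pose bn x := odflt x [pick y | Rb e x y].
have bnP x : odd (deg e x) -> Rb e x (bn x).
  move=> od; rewrite /bn; case: pickP => [y //|none]; exfalso.
  move: od; rewrite /deg -(cardsID [set y | oncyc e x y]).
  have -> : [set y | e x y] :&: [set y | oncyc e x y] = [set y | oncyc e x y].
    by apply/setP => y; rewrite !inE; case: (boolP (oncyc e x y)) => h;
      rewrite ?andbF ?andbT // (oncyc_sub h).
  have -> : [set y | e x y] :\: [set y | oncyc e x y] = set0.
    by apply/setP => y; rewrite !inE; have := none y; rewrite /Rb /= andbC.
  by rewrite cards0 addn0 (negbTE (cycdeg_even x se ie cp)).
rewrite -(card_in_imset (f := fun x => (x, bn x))); last by move=> x1 x2 _ _ [].
apply: subset_leq_card; apply/subsetP => s /imsetP [x]; rewrite inE => ox ->.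
by rewrite inE /= bnP.
Qed.

Lemma mu_odd (T : finType) (e : rel T) :
  mu1 e + muodd e = #|[set x | odd (deg e x)]|.
Proof.
rewrite /mu1 /muodd -(cardsID [set x | deg e x == 1] [set x | odd (deg e x)]).
congr (_ + _); apply: eq_card => x; rewrite !inE; case: (deg e x) => [|[|k]] //=.
all: by case: (odd k).
Qed.

Unset Implicit Arguments. Set Strict Implicit.
Local Open Scope ring_scope.

Theorem theorem4p13 (T : finType) (e : rel T) :
  bi_cactus e -> (4 <= #|T|)%N -> 1 <= beta e ->
  ((num_edges e)%:Z <= Num.floor ((4 * (#|T|%:R - 1) - beta e) / 3 : rat))%R.
Proof.
move=> [[[se ie] conn cp] [col hc]] n4 _.
have cp' : cactus_prop e := cp.
have [r _] : exists r : T, true.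
  case: (pickP (@predT T)) => [r _|none]; first by exists r.
  by move: n4; rewrite (eq_card0 none).
have mE : num_edges e = (#|Ub e| + #|CEset e|)%N := count_main se hc.
have f1 := F1 r erefl se hc cp' conn.
have lb := leaf_bound se ie conn (leq_trans (isT : (3 <= 4)%N) n4).
have ob := odd_bound se ie cp'; rewrite (card_Bo se hc) -mu_odd in ob.
have key : (3 * num_edges e + #|Ub e| <= 4 * #|T|.-1)%N.
  change (#|Eset e|) with (num_edges e) in f1; rewrite mE in f1 *; nlia.
have n1 : (1 <= #|T|)%N by nlia.
rewrite floor_ge_int ler_pdivlMr // -[(num_edges e)%:Z%:~R]/((num_edges e)%:R).
have hb : beta e <= (#|Ub e|)%:R.
  rewrite /beta ge_max; apply/andP; split; first by rewrite ler_nat.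
  by rewrite ler_pdivrMr // -natrM ler_nat mulnC.
have key' : 3 * (num_edges e)%:R + (#|Ub e|)%:R <= 4 * ((#|T|)%:R - 1) :> rat.
  have := key; rewrite -(ler_nat rat) natrD !natrM -subn1 natrB //.
move: hb key'; move: (beta e) ((num_edges e)%:R : rat) ((#|Ub e|)%:R : rat) ((#|T|)%:R : rat).
move=> bt m b n; lra.
Qed.
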